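(* Let $0<H<1$, let $B_H$ be a fractional Brownian motion on $[0,1]$ with Hurst parameter $H$, and let $\|\cdot\|$ be a norm on the H\''older space $C_0^\gamma[0,1]$ for some $0<\gamma<H$ such that there are constants $\theta,C_1,C_2>0$ with \[ -C_1\varepsilon^{-\theta}\le \log \mathbb{P}\big[\|B_H\|\le \varepsilon\big]\le -C_2\varepsilon^{-\theta},\qquad \varepsilon\in(0,1]. \] Let $\eta_k(H)=\mathbb{E}\big[\|B_H\|^{-k}\big]$. Then $\eta_k(H)=k^{k/\theta+o(k)}$ as $k\uparrow\infty$. *)

(* Defs.v *)
From HB Require Import structures.
From mathcomp Require Import all_boot all_order all_algebra.
From mathcomp Require Import all_classical all_reals all_analysis.
Set Implicit Arguments. Unset Strict Implicit. Unset Printing Implicit Defensive.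
Import Order.TTheory GRing.Theory Num.Theory.
Import numFieldNormedType.Exports.
Local Open Scope classical_set_scope.
Local Open Scope ring_scope.

Section defs.
Context {R : realType}.

Definition fbm_cov (H s t : R) : R :=
  (`|s| `^ (2 * H) + `|t| `^ (2 * H) - `|t - s| `^ (2 * H)) / 2.

Definition centered_gaussian_law {d} {T : measurableType d}
    (P : probability T R) (Y : T -> R) (v : R) : Prop :=
  measurable_fun setT Y /\
  forall A : set R, measurable A ->
    P (Y @^-1` A) = (if v == 0 then \d_(0 : R) A
                     else normal_prob 0 (Num.sqrt v) A).

(** Paths are functions R -> R of which only the restriction to [0,1]
    matters. *)
Definition is_fBM {d} {T : measurableType d} (P : probability T R)
    (H : R) (B : T -> R -> R) : Prop :=
  forall (n : nat) (t : 'I_n -> R) (a : 'I_n -> R),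
    (forall i, 0 <= t i <= 1) ->
    centered_gaussian_law P (fun w => \sum_(i < n) a i * B w (t i))
      (\sum_(i < n) \sum_(j < n) a i * a j * fbm_cov H (t i) (t j)).

Definition hoelder0 (gamma : R) (f : R -> R) : Prop :=
  f 0 = 0 /\
  exists C : R, forall s t : R, 0 <= s <= 1 -> 0 <= t <= 1 ->
    `|f t - f s| <= C * `|t - s| `^ gamma.

(** N is a norm on C_0^gamma[0,1] (functions are identified when they
    agree on [0,1]). *)
Definition is_norm_on_hoelder0 (gamma : R) (N : (R -> R) -> R) : Prop :=
  [/\ (forall f g, hoelder0 gamma f -> hoelder0 gamma g ->
         (forall t, 0 <= t <= 1 -> f t = g t) -> N f = N g),
      (forall f, hoelder0 gamma f -> 0 <= N f),
      (forall f, hoelder0 gamma f -> N f = 0 -> forall t, 0 <= t <= 1 -> f t = 0),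
      (forall (c : R) f, hoelder0 gamma f -> N (fun t => c * f t) = `|c| * N f) &
      (forall f g, hoelder0 gamma f -> hoelder0 gamma g ->
         N (fun t => f t + g t) <= N f + N g)].

Definition eta_moment {d} {T : measurableType d} (P : probability T R)
    (N : (R -> R) -> R) (B : T -> R -> R) (k : nat) : \bar R :=
  (\int[P]_w ((N (B w)) ^- k)%:E)%E.

End defs.

(* Main.v *)
Require Import Defs.
From HB Require Import structures.
From mathcomp Require Import all_boot all_order all_algebra.
From mathcomp Require Import all_classical all_reals all_analysis.
From mathcomp Require Import ring lra.
From mathcomp Require Import measurable_realfun.
Import Order.TTheory GRing.Theory Num.Theory.
Import numFieldNormedType.Exports.
Local Open Scope classical_set_scope.
Local Open Scope ring_scope.

Lemma key_ineq (R : realType) (m c s : R) : 0 < m -> 0 < c ->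
  m * s - c * expR s <= m * ln (m / c) - m.
Proof.
move=> m0 c0.
set z := c * expR s / m.
have z0 : 0 < z by rewrite /z divr_gt0 // mulr_gt0 // expR_gt0.
have hz : ln z <= z - 1.
  have := @le_ln1Dx R (z - 1); rewrite addrCA subrr addr0; apply; lra.
have lnz : ln z = ln c + s - ln m.
  rewrite /z ln_div ?lnM ?expRK // posrE // ?mulr_gt0 ?expR_gt0 //.
have lmc : ln (m / c) = ln m - ln c by rewrite ln_div // posrE.
have e1 : m * (z - 1) = c * expR s - m.
  by rewrite /z; field; rewrite gt_eqF.
have h := ler_wpM2l (ltW m0) hz.
rewrite e1 lnz in h; rewrite lmc.
have -> : m * (ln m - ln c) - m = m * ln m - m * ln c - m by ring.
have e2 : m * (ln c + s - ln m) = m * ln c + m * s - m * ln m by ring.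
rewrite e2 in h; lra.
Qed.

Lemma term_bound (R : realType) (a c m theta : R) (j : nat) :
  0 < a -> 0 < c -> 0 < m -> 0 < theta ->
  expR (a * ((j%:R + 1) * (m * theta))) * expR (- (2 * c) * expR (theta * a * j%:R)) <=
  expR (a * (m * theta) + m * ln (m / c) - m - c) * expR (- (c * theta * a)) ^+ j.
Proof.
move=> a0 c0 m0 th0.
rewrite -expRD -expRM_natl -expRD ler_expR.
set s := theta * a * j%:R.
have h1 := @key_ineq R m c s m0 c0.
have h2 := expR_ge1Dx s.
have e1 : a * ((j%:R + 1) * (m * theta)) = a * (m * theta) + m * s.
  by rewrite /s; ring.
have e2 : j%:R * - (c * theta * a) = - (c * s) by rewrite /s; ring.
have e3 : - (2 * c) * expR s = - c * expR s - c * expR s by ring.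
rewrite e1 e2 e3.
have h3 : c * (1 + s) <= c * expR s by rewrite ler_wpM2l // ltW.
lra.
Qed.

Section S.
Context d (T : measurableType d) (R : realType) (P : probability T R)
  (X : T -> R) (theta C1 C2 : R).
Hypotheses (mX : measurable_fun setT X) (X0 : forall w, 0 <= X w)
  (th0 : 0 < theta) (c10 : 0 < C1) (c20 : 0 < C2)
  (hF : forall eps : R, 0 < eps <= 1 ->
     - C1 * eps `^ (- theta) <= ln (fine (P [set w | X w <= eps]))
     /\ ln (fine (P [set w | X w <= eps])) <= - C2 * eps `^ (- theta)).

Lemma mset e : measurable [set w | X w <= e].
Proof.
have := mX measurableT _ (measurable_itv `]-oo, e]); rewrite setTI.
congr measurable; apply/seteqP; split => w /=; rewrite in_itv /=; by [].
Qed.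

Lemma Pfin (A : set T) : measurable A -> P A = (fine (P A))%:E.
Proof.
move=> mA; rewrite fineK //; rewrite ge0_fin_numE //.
by rewrite (le_lt_trans (probability_le1 P mA)) // ltry.
Qed.

Lemma Fbounds eps : 0 < eps <= 1 ->
  0 < fine (P [set w | X w <= eps]) /\
  expR (- C1 * eps `^ (- theta)) <= fine (P [set w | X w <= eps]) /\
  fine (P [set w | X w <= eps]) <= expR (- C2 * eps `^ (- theta)).
Proof.
move=> he; have [h1 h2] := hF _ he.
set p := fine _ in h1 h2 *.
have pos : 0 < p.
  rewrite ltNge; apply/negP => p0; move: h2; rewrite ln0 //.
  have q : 0 < C2 * eps `^ (- theta).
    by apply: mulr_gt0 => //; apply: powR_gt0; case/andP: he.
  move=> h2'; lra.
split => //; split.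
- by rewrite -(lnK pos) ler_expR.
- by rewrite -(lnK pos) ler_expR.
Qed.

Lemma Fexp y : 0 <= y ->
  0 < fine (P [set w | X w <= expR (- y)]) /\
  expR (- C1 * expR (theta * y)) <= fine (P [set w | X w <= expR (- y)]) /\
  fine (P [set w | X w <= expR (- y)]) <= expR (- C2 * expR (theta * y)).
Proof.
move=> y0.
have he : 0 < expR (- y) <= 1 by rewrite expR_gt0 expR_le1 oppr_le0.
have -> : expR (theta * y) = expR (- y) `^ (- theta).
  by rewrite -expRM; congr expR; ring.
exact: Fbounds.
Qed.

Lemma Fge0 e : 0 <= fine (P [set w | X w <= e]).
Proof. by apply: fine_ge0; apply: measure_ge0. Qed.

Lemma P0 : P [set w | X w <= 0] = 0%E.
Proof.
rewrite Pfin; last exact: mset.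
set p := fine _; have p0 : 0 <= p by exact: Fge0.
rewrite le_eqVlt in p0; case/orP: p0 => [/eqP <- // | p0].
exfalso.
set y := `|ln p| / (C2 * theta).
have y0 : 0 <= y by rewrite /y divr_ge0 // ltW // mulr_gt0.
have [_ [_ hup]] := Fexp _ y0.
have hle : p <= fine (P [set w | X w <= expR (- y)]).
  rewrite /p; apply: fine_le.
  - by rewrite ge0_fin_numE ?measure_ge0 // (le_lt_trans (probability_le1 P (mset 0))) // ltry.
  - by rewrite ge0_fin_numE ?measure_ge0 // (le_lt_trans (probability_le1 P (mset _))) // ltry.
  apply: le_measure; rewrite ?inE; try exact: mset.
  by move=> w /= hw; rewrite (le_trans hw) // ltW // expR_gt0.
have h1 := expR_ge1Dx (theta * y).
have h2 : - C2 * expR (theta * y) < ln p.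
  have e1 : C2 * (1 + theta * y) = C2 + `|ln p|.
    by rewrite /y; field; rewrite ?gt_eqF.
  have h3 : C2 * (1 + theta * y) <= C2 * expR (theta * y) by rewrite ler_wpM2l // ltW.
  have h4 : - `|ln p| <= ln p by exact: lerNnormlW.
  rewrite e1 in h3; rewrite mulNr; clear e1; clearbody y.
  move: h3 h4; clear -c20; move: (C2 * expR (theta * y)) (`|ln p|) (ln p) => a b c h3 h4; apply: (lt_le_trans _ h4); rewrite ltrN2; apply: (lt_le_trans _ h3); rewrite -subr_gt0 addrK; exact: c20.
have := le_trans hle hup; rewrite -(lnK p0) ler_expR; lra.
Qed.

Lemma mg (k : nat) : measurable_fun [set: R]
  (fun x : R => if x <= 0 then (0 : R) ^- k else expR (- (k%:R * ln x))).
Proof.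
apply: measurable_fun_ifT.
- by apply: measurable_fun_ler => //; exact: measurable_cst.
- exact: measurable_cst.
- apply: measurableT_comp; first exact: measurable_expR.
  apply: (measurable_funN (f := fun x : R => k%:R * ln x)).
  apply: (measurable_funM (f := cst k%:R) (g := @ln R)); first exact: measurable_cst.
  exact: measurable_ln.
Qed.

Lemma gE (k : nat) x : 0 <= x ->
  x ^- k = (if x <= 0 then (0 : R) ^- k else expR (- (k%:R * ln x))).
Proof.
move=> x0; case: ifPn => [hx | hx].
  by have -> : x = 0 by apply/eqP; rewrite eq_le hx x0.
have xp : 0 < x by rewrite ltNge.
by rewrite expRN expRM_natl lnK // posrE.
Qed.

Lemma mY (k : nat) : measurable_fun [set: T] (fun w : T => (((X w) ^- k : R)%:E : \bar R)).
Proof.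
suff h : measurable_fun [set: T] (fun w => X w ^- k) by exact/measurable_EFinP.
have -> : (fun w => X w ^- k) =
   (fun x : R => if x <= 0 then (0 : R) ^- k else expR (- (k%:R * ln x))) \o X.
  by apply/funext => w /=; rewrite -gE.
apply: measurableT_comp => //; exact: mg.
Qed.

Lemma lower (k : nat) : (0 < k)%N ->
  ((expR (k%:R / theta * ln k%:R - C1 * k%:R))%:E <=
   \int[P]_w ((X w) ^- k)%:E)%E.
Proof.
move=> k0.
have k1 : (1 : R) <= k%:R by rewrite ler1n.
have kp : (0 : R) < k%:R by rewrite ltr0n.
set y := ln k%:R / theta.
have y0 : 0 <= y by rewrite /y divr_ge0 ?ln_ge0 // ltW.
set u := expR (- y).
have u0 : 0 < u by exact: expR_gt0.
have [_ [hlo _]] := Fexp _ y0.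
have ey : expR (theta * y) = k%:R by rewrite /y mulrC divfK ?gt_eqF // lnK // posrE.
rewrite ey in hlo.
set A := [set w | X w <= u] `\` [set w | X w <= 0].
have mA : measurable A by apply: measurableD; exact: mset.
have PA : (P [set w | (X w <= u)%R] <= P A)%E.
  apply: (le_trans (y := P (A `|` [set w | (X w <= 0)%R]))).
    apply: le_measure.
    - by rewrite inE; exact: mset.
    - by rewrite inE; apply: measurableU; [exact: mA|exact: mset].
    move=> w hw; case: (boolP (X w <= 0)%R) => h; [right | left; split] => //; exact/negP.
  apply: (le_trans (measureU2 _ mA (mset 0))).
  have h0 : P [set w | (X w <= 0)%R] = 0%E by exact: P0.
  have hl : forall a b : \bar R, a = b -> (a <= b)%E by move=> a b ->.
  rewrite -[X in (_ <= X)%E]adde0; apply: leeD2l; apply: hl; exact: h0.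
have uk : u ^- k = expR (k%:R * y) by rewrite /u -expRM_natr -expRN; congr expR; ring.
have H1 : (\int[P]_w ((u ^- k) * \1_A w)%:E <= \int[P]_w ((X w) ^- k)%:E)%E.
  apply: (ge0_le_integral P measurableT).
  - by move=> w _; rewrite lee_fin mulr_ge0 // ?invr_ge0 ?exprn_ge0 // ltW.
  - apply/measurable_EFinP; apply: measurable_funM; first exact: measurable_cst.
    exact: measurable_indic.
  - exact: mY.
  move=> w _; rewrite lee_fin /indic.
  case: (boolP (w \in A)) => hw; last first.
    by rewrite mulr0 invr_ge0 exprn_ge0.
  rewrite mulr1; move: hw; rewrite inE /A /= => -[hu hn].
  have xp : 0 < X w by rewrite ltNge; apply/negP.
  rewrite lef_pV2 ?posrE ?exprn_gt0 //.
  by apply: lerXn2r; rewrite ?nnegrE ?X0 ?(ltW u0).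
apply: le_trans H1.
rewrite (_ : (fun w => (u ^- k * \1_A w)%:E) = (fun w => ((u ^- k)%:E * (\1_A w)%:E)%E)); last first.
  by apply/funext => w; rewrite EFinM.
have HZ : (\int[P]_w ((u ^- k)%:E * (\1_A w)%:E) = (u ^- k)%:E * \int[P]_w (\1_A w)%:E)%E.
  apply: (ge0_integralZl_EFin P measurableT).
  - by move=> w _; rewrite lee_fin /indic; case: (_ \in _).
  - by apply/measurable_EFinP; exact: measurable_indic.
  - by rewrite invr_ge0 exprn_ge0 // ltW.
rewrite HZ.
rewrite integral_indic // setIT uk.
have -> : k%:R / theta * ln k%:R - C1 * k%:R = k%:R * y + (- C1 * k%:R).
  by rewrite /y; ring.
rewrite expRD EFinM; apply: lee_pmul => //.
apply: (le_trans _ PA); rewrite (Pfin _ (mset u)) lee_fin.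
exact: hlo.
Qed.

Lemma upper (k : nat) : (0 < k)%N ->
  (\int[P]_w ((X w) ^- k)%:E <=
   (1 + expR (ln 2 * k%:R + k%:R / theta * ln (k%:R / theta / (C2 / 2))
                - k%:R / theta - C2 / 2)
        * (1 - expR (- (C2 / 2 * theta * ln 2)))^-1)%:E)%E.
Proof.
move=> k0.
have kp : (0 : R) < k%:R by rewrite ltr0n.
set a := ln (2 : R); set c := C2 / 2; set m := k%:R / theta.
have a0 : 0 < a by rewrite /a ln_gt0 // ltr1n.
have c0 : 0 < c by rewrite /c divr_gt0.
have m0 : 0 < m by rewrite /m divr_gt0.
have mth : m * theta = k%:R by rewrite /m divfK // gt_eqF.
have c2 : 2 * c = C2 by rewrite /c mulrC divfK.
set q := expR (- (c * theta * a)).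
have q0 : 0 < q by exact: expR_gt0.
have q1 : q < 1 by rewrite /q expR_lt1 oppr_lt0 !mulr_gt0.
set A := expR (a * k%:R + m * ln (m / c) - m - c).
have A0 : 0 <= A by exact: expR_ge0.
pose eps := fun j : nat => expR (- (a * j%:R)).
pose B := fun j : nat => [set w | X w <= eps j].
pose cj := fun j : nat => expR (a * ((j%:R + 1) * k%:R)).
have mB : forall j, measurable (B j) by move=> j; exact: mset.
pose G := fun (j : nat) (w : T) => (cj j * \1_(B j) w)%:E.
have G0 : forall j w, (0 <= G j w)%E.
  by move=> j w; rewrite /G lee_fin mulr_ge0 ?expR_ge0 // /indic; case: (_ \in _).
have mG : forall j, measurable_fun setT (G j).
  move=> j; apply/measurable_EFinP; apply: measurable_funM; first exact: measurable_cst.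
  exact: measurable_indic.
have hpt : forall w, ((X w ^- k)%:E <= 1 + \sum_(j <oo) G j w)%E.
  move=> w; have hx := X0 w.
  have S0 : (0 <= \sum_(j <oo) G j w)%E by apply: nneseries_ge0 => n _ _; exact: G0.
  case: (leP (X w) 0) => [hx0 | hxp].
    have -> : X w = 0 by apply/eqP; rewrite eq_le hx0 hx.
    rewrite expr0n gtn_eqF // invr0; exact: adde_ge0.
  case: (leP (X w) 1) => [hx1 | hx1]; last first.
    apply: (le_trans _ (leeDl _ S0)); rewrite lee_fin invf_le1 ?exprn_gt0 //.
    by rewrite exprn_ege1 // ltW.
  set t := - ln (X w) / a.
  have t0 : 0 <= t by rewrite /t divr_ge0 ?oppr_ge0 ?ln_le0 // ltW.
  set j := Num.truncn t.
  have /andP [jt tj] := truncn_itv t0.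
  rewrite -/j in jt tj.
  have at1 : a * t = - ln (X w) by rewrite /t mulrC divfK // gt_eqF.
  have hB : w \in B j.
    rewrite inE /B /= /eps -(lnK hxp) ler_expR lerNr -at1.
    by rewrite ler_wpM2l // ltW.
  have hG : G j w = (cj j)%:E by rewrite /G /indic hB mulr1.
  apply: (le_trans _ (leeDr _ (lee01 : (0 <= 1)%E)))=> //.
  rewrite (@nneseriesD1 R (fun i => G i w) j xpredT) // hG.
  apply: (le_trans _ (leeDl _ _)); last first.
    by apply: nneseries_ge0 => n _ _; exact: G0.
  rewrite lee_fin -(lnK hxp) -expRM_natl -expRN /cj ler_expR.
  rewrite -natr1 in tj.
  have h : - ln (X w) <= a * (j%:R + 1) by rewrite -at1 ltW // ltr_pM2l.
  have := ler_wpM2l (ltW kp) h.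
  have -> : a * ((j%:R + 1) * k%:R) = k%:R * (a * (j%:R + 1)) by ring.
  by rewrite mulrN.
have mS : measurable_fun setT (fun w => \sum_(j <oo) G j w)%E.
  exact: (@ge0_emeasurable_sum _ _ _ setT G xpredT).
have H1 : (\int[P]_w ((X w) ^- k)%:E <= \int[P]_w (1 + \sum_(j <oo) G j w))%E.
  apply: (ge0_le_integral P measurableT).
  - by move=> w _; rewrite lee_fin invr_ge0 exprn_ge0.
  - exact: mY.
  - by apply: emeasurable_funD => //; exact: measurable_cst.
  - by move=> w _; exact: hpt.
apply: (le_trans H1).
have H2 : (\int[P]_w (1 + \sum_(j <oo) G j w) = 1 + \sum_(j <oo) \int[P]_w G j w)%E.
  rewrite (ge0_integralD P measurableT (f1 := fun _ => 1%E) (f2 := (fun w => \sum_(j <oo) G j w)%E)).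
  - rewrite (integral_cst P measurableT 1); congr (_ + _)%E.
      by rewrite mul1e; exact: probability_setT.
    by rewrite (integral_nneseries P measurableT (f := G)) // => j; exact: mG.
  - by move=> w _; exact: lee01.
  - exact: measurable_cst.
  - by move=> w _; apply: nneseries_ge0 => n _ _; exact: G0.
  - exact: mS.
rewrite H2.
have H3 : forall j, (\int[P]_w G j w = (cj j * fine (P (B j)))%:E)%E.
  move=> j.
  have -> : G j = (fun w => ((cj j)%:E * (\1_(B j) w)%:E)%E) by apply/funext => w; rewrite /G EFinM.
  rewrite (ge0_integralZl_EFin P measurableT).
  - by rewrite integral_indic // setIT EFinM -Pfin.
  - by move=> w _; rewrite lee_fin /indic; case: (_ \in _).
  - by apply/measurable_EFinP; exact: measurable_indic.
  - exact: expR_ge0.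
rewrite EFinD; apply: leeD2l.
have H4 : (\sum_(j <oo) \int[P]_w G j w <= \sum_(j <oo) (A * q ^+ j)%:E)%E.
  apply: lee_nneseries.
    by move=> j _ _; apply: integral_ge0 => w _; exact: G0.
  move=> j _; rewrite H3 lee_fin.
  have aj0 : 0 <= a * j%:R by rewrite mulr_ge0 // ltW.
  have [_ [_ hup]] := Fexp _ aj0.
  apply: (le_trans (ler_wpM2l (expR_ge0 _) hup)).
  have := @term_bound R a c m theta j a0 c0 m0 th0.
  by rewrite mth c2 -/A -/q [theta * (a * _)]mulrA.
apply: (le_trans H4).
apply: lime_le.
  by apply: is_cvg_nneseries => n _ _; rewrite lee_fin mulr_ge0 // exprn_ge0 // ltW.
apply: nearW => n; rewrite sumEFin lee_fin.
have := @geometric_le_lim R n A q A0 q0.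
rewrite ger0_norm ?(ltW q0) //; move=> /(_ q1).
by rewrite /series /geometric /=.
Qed.
End S.
Lemma asym (R : realType) (K : R) (g : nat -> R) : 0 <= K ->
  (forall k, (2 <= k)%N -> `|g k| <= K * k%:R) ->
  (fun k : nat => g k / ln (k%:R : R) / k%:R) @ \oo --> (0 : R).
Proof.
move=> K0 hg.
apply/cvgrPdist_le => eps eps0.
set N := (Num.truncn (expR (K / eps))).+2.
exists N => // k /= hk.
have k2 : (2 <= k)%N by apply: leq_trans hk; rewrite /N.
have kp : (0 : R) < k%:R by rewrite ltr0n (leq_trans _ k2).
have lk : 0 < ln (k%:R : R) by rewrite ln_gt0 // ltr1n.
have hN : expR (K / eps) < k%:R.
  have /andP [_ h] := truncn_itv (expR_ge0 (K / eps)).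
  apply: (lt_le_trans h); rewrite ler_nat; apply: leq_trans hk; rewrite /N; exact: leqnSn.
have hl : K / eps < ln (k%:R : R).
  by rewrite -(ltr_expR) lnK // posrE.
have e1 : g k / ln (k%:R : R) / k%:R = g k / (ln (k%:R : R) * k%:R) by rewrite invfM mulrA.
rewrite sub0r normrN e1 normrM (ger0_norm (x := _^-1)); last by rewrite invr_ge0 mulr_ge0 // ltW.
rewrite ler_pdivrMr ?mulr_gt0 //.
apply: (le_trans (hg k k2)).
rewrite mulrA ler_wpM2r // ?ltW //.
by move: hl; rewrite ltr_pdivrMr // mulrC.
Qed.

Lemma bounds_ln (R : realType) (theta C1 C2 S Nt : R) (k : nat) (e : R) :
  0 < theta -> 0 < C1 -> 0 < C2 -> 0 < S -> (0 < k)%N ->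
  - ln (theta * (C2 / 2)) <= Nt -> 0 <= Nt ->
  expR (k%:R / theta * ln k%:R - C1 * k%:R) <= e ->
  e <= 1 + expR (ln 2 * k%:R + k%:R / theta * ln (k%:R / theta / (C2 / 2))
                - k%:R / theta - C2 / 2) * S ->
  - (C1 * k%:R) <= ln e - k%:R / theta * ln k%:R <=
    (ln (1 + S) + ln 2 + Nt / theta) * k%:R.
Proof.
move=> th0 c10 c20 S0 k0 hNt Nt0 hlo hup.
have kp : (0 : R) < k%:R by rewrite ltr0n.
have k1 : (1 : R) <= k%:R by rewrite ler1n.
set L := k%:R / theta * ln k%:R.
have L0 : 0 <= L by rewrite /L mulr_ge0 ?divr_ge0 ?ln_ge0 // ltW.
have e0 : 0 < e by apply: lt_le_trans hlo; exact: expR_gt0.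
have c0 : 0 < C2 / 2 by rewrite divr_gt0.
set a := ln (2 : R).
have a0 : 0 < a by rewrite /a ln_gt0 // ltr1n.
apply/andP; split.
  have hl1 : L - C1 * k%:R <= ln e by rewrite -ler_expR lnK // posrE.
  lra.
have hm : k%:R / theta * ln (k%:R / theta / (C2 / 2)) = L - k%:R * (ln (theta * (C2 / 2)) / theta).
  have -> : k%:R / theta / (C2 / 2) = k%:R / (theta * (C2 / 2)) by rewrite -mulrA -invfM.
  by rewrite ln_div ?posrE ?mulr_gt0 // /L; field; rewrite gt_eqF.
set D0 := a + Nt / theta.
set Y := L + k%:R * D0.
have hE : a * k%:R + k%:R / theta * ln (k%:R / theta / (C2 / 2)) - k%:R / theta - C2 / 2 <= Y.
  rewrite hm /Y /D0.
  have h1 : - (ln (theta * (C2 / 2)) / theta) <= Nt / theta by rewrite -mulNr ler_wpM2r // invr_ge0 ltW.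
  have h2 : 0 <= k%:R / theta by rewrite divr_ge0 // ltW.
  have h3 := ler_wpM2l (ltW kp) h1.
  lra.
have D00 : 0 <= D0 by rewrite /D0; apply: addr_ge0; [exact: ltW | apply: divr_ge0 => //; exact: ltW].
have Y0 : 0 <= Y by rewrite /Y; apply: addr_ge0 => //; apply: mulr_ge0 => //; exact: ltW.
have hup2 : e <= (1 + S) * expR Y.
  apply: (le_trans hup).
  have h1 : expR (a * k%:R + k%:R / theta * ln (k%:R / theta / (C2 / 2)) - k%:R / theta - C2 / 2) * S <= expR Y * S.
    by apply: ler_wpM2r; [exact: ltW | rewrite ler_expR].
  have h2 : 1 <= expR Y by rewrite -expR0 ler_expR.
  rewrite /a in h1.
  have -> : (1 + S) * expR Y = expR Y + expR Y * S by ring.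
  lra.
have hl : ln e <= ln (1 + S) + Y.
  have p1 : 0 < 1 + S by lra.
  by rewrite -ler_expR lnK ?posrE // expRD lnK ?posrE // mulrC.
have lS : 0 <= ln (1 + S) by rewrite ln_ge0 //; lra.
have h4 : ln (1 + S) <= ln (1 + S) * k%:R by rewrite ler_peMr.
have -> : (ln (1 + S) + ln 2 + Nt / theta) * k%:R = ln (1 + S) * k%:R + k%:R * D0.
  by rewrite /D0 /a; ring.
move: hl; rewrite /Y; lra.
Qed.

Theorem lemma2p4 (d : measure_display) (T : measurableType d) (R : realType)
    (P : probability T R) (H gamma theta C1 C2 : R)
    (B : T -> R -> R) (N : (R -> R) -> R) :
  0 < H < 1 ->
  is_fBM P H B ->
  0 < gamma < H ->
  (forall w, hoelder0 gamma (B w)) ->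
  is_norm_on_hoelder0 gamma N ->
  measurable_fun setT (fun w => N (B w)) ->
  0 < theta -> 0 < C1 -> 0 < C2 ->
  (forall eps : R, 0 < eps <= 1 ->
     - C1 * eps `^ (- theta) <= ln (fine (P [set w | N (B w) <= eps]))
     /\ ln (fine (P [set w | N (B w) <= eps])) <= - C2 * eps `^ (- theta)) ->
  exists r : nat -> R,
    (fun k : nat => r k / k%:R) @ \oo --> (0 : R) /\
    \forall k \near \oo,
      eta_moment P N B k = ((k%:R) `^ (k%:R / theta + r k))%:E.
Proof.
move=> _ _ _ hB hN mX th0 c10 c20 hF.
pose X := fun w => N (B w).
have X0 : forall w, 0 <= X w.
  by move=> w; case: hN => _ hpos _ _ _; exact: hpos _ (hB w).
set q := expR (- (C2 / 2 * theta * ln 2)).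
have q1 : q < 1.
  rewrite /q expR_lt1 oppr_lt0 mulr_gt0 ?ln_gt0 ?ltr1n //.
  by rewrite mulr_gt0 // divr_gt0.
set S := (1 - q)^-1.
have S0 : 0 < S by rewrite /S invr_gt0 subr_gt0.
set Nt := `|ln (theta * (C2 / 2))|.
have hNt : - ln (theta * (C2 / 2)) <= Nt by rewrite /Nt -normrN ler_norm.
have Nt0 : 0 <= Nt by exact: normr_ge0.
set K := C1 + (ln (1 + S) + ln 2 + Nt / theta).
have K1 : 0 <= ln (1 + S) + ln 2 + Nt / theta.
  apply: addr_ge0; last by apply: divr_ge0 => //; exact: ltW.
  apply: addr_ge0; last by apply: ln_ge0; rewrite ler1n.
  by apply: ln_ge0; rewrite lerDl ltW.
have K0 : 0 <= K by rewrite /K; apply: addr_ge0 => //; exact: ltW.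
have main : forall k : nat, (0 < k)%N ->
    eta_moment P N B k = (fine (eta_moment P N B k))%:E /\
    - (C1 * k%:R) <= ln (fine (eta_moment P N B k)) - k%:R / theta * ln k%:R <=
    (ln (1 + S) + ln 2 + Nt / theta) * k%:R /\
    0 < fine (eta_moment P N B k).
  move=> k k0.
  have hl : ((expR (k%:R / theta * ln k%:R - C1 * k%:R))%:E <= eta_moment P N B k)%E :=
    @lower d T R P X theta C1 C2 mX X0 th0 c20 hF k k0.
  have hu : (eta_moment P N B k <= (1 + expR (ln 2 * k%:R + k%:R / theta * ln (k%:R / theta / (C2 / 2))
                - k%:R / theta - C2 / 2) * S)%:E)%E :=
    @upper d T R P X theta C1 C2 mX X0 th0 c20 hF k k0.
  case: (eta_moment P N B k) hl hu => [r | | ] hl hu //=.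
  rewrite !lee_fin in hl hu; split => //; split.
    exact: (@bounds_ln R theta C1 C2 S Nt k r th0 c10 c20 S0 k0 hNt Nt0 hl hu).
  by apply: lt_le_trans hl; exact: expR_gt0.
exists (fun k => (ln (fine (eta_moment P N B k)) - k%:R / theta * ln k%:R) / ln k%:R).
split.
  apply: (@asym R K (fun k => ln (fine (eta_moment P N B k)) - k%:R / theta * ln k%:R) K0).
  move=> k k2.
  have k0 : (0 < k)%N by apply: leq_trans k2.
  have [_ [/andP [h1 h2] _]] := main k k0.
  have p1 : 0 <= (ln (1 + S) + ln 2 + Nt / theta) * k%:R.
    by apply: mulr_ge0.
  have p2 : 0 <= C1 * k%:R by apply: mulr_ge0 => //; exact: ltW.
  rewrite ler_norml; rewrite /K; clearbody Nt S q.
  apply/andP; split; lra.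
exists 2%N => // k /= k2.
have k0 : (0 < k)%N by apply: leq_trans k2.
have [E [_ ep]] := main k k0.
rewrite E; congr EFin.
have lk : 0 < ln (k%:R : R) by rewrite ln_gt0 // ltr1n.
rewrite /powR (negbTE (lt0r_neq0 _)) ?ltr0n //.
rewrite -[X in X = _](lnK ep) ?posrE //; congr expR.
by field; rewrite !gt_eqF.
Qed.
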